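(* Let $G_{12}$ be the graph with vertex set $\{1,\dots,12\}$ in which two distinct vertices are adjacent if and only if they both belong to one of the sets $\{1,4,7\}$, $\{2,4,5,6\}$, $\{2,4,6,7\}$, $\{2,4,6,9\}$, $\{2,4,9,12\}$, $\{2,5,8\}$, $\{2,6,7,11\}$, $\{2,11,12\}$, $\{3,6,9\}$, $\{4,5,6,10\}$, $\{4,10,12\}$, $\{6,10,11\}$, $\{10,11,12\}$. Then $G_{12}$ is weakly CIS.
   Context: A family $\mathcal C$ of maximal cliques is edge covering if every two adjacent vertices lie in a common member; a family $\mathcal S$ of maximal stable sets is non-edge covering if every two distinct non-adjacent vertices lie in a common member. A graph is weakly CIS if there are an edge covering family $\mathcal C$ of maximal cliques and a non-edge covering family $\mathcal S$ of maximal stable sets with $C\cap S\neq\emptyset$ for all $C\in\mathcal C$, $S\in\mathcal S$. *)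

(* Defs.v *)
From mathcomp Require Import all_boot.
Set Implicit Arguments. Unset Strict Implicit. Unset Printing Implicit Defensive.

(* A simple graph on a finite vertex type T is given by an adjacency relation e
   (assumed symmetric and irreflexive; the graph G12 below is so by construction). *)
Section Graphs.
Variables (T : finType) (e : rel T).

Definition is_clique (A : {set T}) : bool :=
  [forall x in A, forall y in A, (x != y) ==> e x y].

Definition is_stable (A : {set T}) : bool :=
  [forall x in A, forall y in A, (x != y) ==> ~~ e x y].

Definition maximal_clique (A : {set T}) : bool := maxset is_clique A.
Definition maximal_stable (A : {set T}) : bool := maxset is_stable A.

Definition edge_covering (C : {set {set T}}) : Prop :=
  (forall K, K \in C -> maximal_clique K) /\
  (forall x y, e x y -> exists2 K, K \in C & (x \in K) && (y \in K)).

Definition non_edge_covering (S : {set {set T}}) : Prop :=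
  (forall I, I \in S -> maximal_stable I) /\
  (forall x y, x != y -> ~~ e x y -> exists2 I, I \in S & (x \in I) && (y \in I)).

Definition weakly_CIS : Prop :=
  exists (C S : {set {set T}}),
    [/\ edge_covering C, non_edge_covering S &
        forall K I, K \in C -> I \in S -> K :&: I != set0].
End Graphs.

(* Vertex i : 'I_12 represents the paper's vertex i+1. *)
Definition G12_sets : seq (seq nat) :=
  [:: [:: 1; 4; 7]; [:: 2; 4; 5; 6]; [:: 2; 4; 6; 7]; [:: 2; 4; 6; 9];
      [:: 2; 4; 9; 12]; [:: 2; 5; 8]; [:: 2; 6; 7; 11]; [:: 2; 11; 12];
      [:: 3; 6; 9]; [:: 4; 5; 6; 10]; [:: 4; 10; 12]; [:: 6; 10; 11];
      [:: 10; 11; 12]].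

Definition G12 : rel 'I_12 := fun x y =>
  (x != y) && has (fun s => (x.+1 \in s) && (y.+1 \in s)) G12_sets.

(* Main.v *)
Require Import Defs.
From mathcomp Require Import all_boot.
Set Implicit Arguments. Unset Strict Implicit. Unset Printing Implicit Defensive.

Lemma max_of (T : finType) (P : {set T} -> bool)
  (hered : forall A B : {set T}, A \subset B -> P B -> P A) A :
  P A -> (forall x, x \notin A -> ~~ P (x |: A)) -> maxset P A.
Proof.
move=> PA H; apply/maxsetP; split=> // B PB sAB.
apply/eqP; rewrite eq_sym eqEsubset sAB /=; apply/subsetP => x xB.
apply/negPn/negP => xA; have := H x xA.
by rewrite (hered _ B) // subUset sub1set xB sAB.
Qed.

Lemma clique_hered (T : finType) (e : rel T) (A B : {set T}) :
  A \subset B -> is_clique e B -> is_clique e A.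
Proof.
move=> /subsetP sAB /forallP H; apply/forallP => x; apply/implyP => xA.
have /implyP/(_ (sAB _ xA))/forallP H2 := H x.
apply/forallP => y; apply/implyP => yA.
by have /implyP/(_ (sAB _ yA)) := H2 y.
Qed.

Lemma stable_hered (T : finType) (e : rel T) (A B : {set T}) :
  A \subset B -> is_stable e B -> is_stable e A.
Proof.
move=> /subsetP sAB /forallP H; apply/forallP => x; apply/implyP => xA.
have /implyP/(_ (sAB _ xA))/forallP H2 := H x.
apply/forallP => y; apply/implyP => yA.
by have /implyP/(_ (sAB _ yA)) := H2 y.
Qed.

Definition ords : seq 'I_12 :=
  [:: @Ordinal 12 0 isT; @Ordinal 12 1 isT; @Ordinal 12 2 isT; @Ordinal 12 3 isT;
      @Ordinal 12 4 isT; @Ordinal 12 5 isT; @Ordinal 12 6 isT; @Ordinal 12 7 isT;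
      @Ordinal 12 8 isT; @Ordinal 12 9 isT; @Ordinal 12 10 isT; @Ordinal 12 11 isT].

Lemma mem_ords (x : 'I_12) : x \in ords.
Proof.
have -> : (x \in ords) = (val x \in map val ords) by rewrite mem_map //; exact: val_inj.
have -> : map val ords = iota 0 12 by [].
by rewrite mem_iota /= ltn_ord.
Qed.

Definition cliqueP (p : pred 'I_12) :=
  all (fun x => all (fun y => p x ==> p y ==> (x != y) ==> G12 x y) ords) ords.
Definition stableP (p : pred 'I_12) :=
  all (fun x => all (fun y => p x ==> p y ==> (x != y) ==> ~~ G12 x y) ords) ords.

Lemma cliqueE (A : {set 'I_12}) (p : pred 'I_12) :
  (forall x, (x \in A) = p x) -> is_clique G12 A = cliqueP p.
Proof.
move=> H; apply/forallP/allP => [Hf x _|Hf x].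
  apply/allP => y _; rewrite -!H; apply/implyP => xA; apply/implyP => yA.
  by have /implyP/(_ xA)/forallP/(_ y)/implyP/(_ yA) := Hf x.
apply/implyP => xA; apply/forallP => y; apply/implyP => yA.
by have /allP/(_ y (mem_ords y)) := Hf x (mem_ords x); rewrite -!H xA yA.
Qed.

Lemma stableE (A : {set 'I_12}) (p : pred 'I_12) :
  (forall x, (x \in A) = p x) -> is_stable G12 A = stableP p.
Proof.
move=> H; apply/forallP/allP => [Hf x _|Hf x].
  apply/allP => y _; rewrite -!H; apply/implyP => xA; apply/implyP => yA.
  by have /implyP/(_ xA)/forallP/(_ y)/implyP/(_ yA) := Hf x.
apply/implyP => xA; apply/forallP => y; apply/implyP => yA.
by have /allP/(_ y (mem_ords y)) := Hf x (mem_ords x); rewrite -!H xA yA.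
Qed.

Definition mk (s : seq nat) : {set 'I_12} := [set x : 'I_12 | x.+1 \in s].

Definition Cs : seq (seq nat) := [:: [:: 1; 4; 7]; [:: 2; 5; 8]; [:: 3; 6; 9];
  [:: 4; 5; 6; 10]; [:: 2; 6; 7; 11]; [:: 2; 4; 9; 12]; [:: 10; 11; 12]].
Definition Ss : seq (seq nat) := [:: [:: 1; 2; 3; 10]; [:: 7; 8; 9; 10]; [:: 3; 4; 8; 11];
  [:: 1; 5; 9; 11]; [:: 3; 5; 7; 12]; [:: 1; 6; 8; 12]].

Definition Cset : {set {set 'I_12}} := [set K | has (fun s => K == mk s) Cs].
Definition Sset : {set {set 'I_12}} := [set K | has (fun s => K == mk s) Ss].

Lemma Cchk : all (fun s => cliqueP (fun x => x.+1 \in s) &&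
   all (fun z : 'I_12 => (z.+1 \notin s) ==> ~~ cliqueP (fun x : 'I_12 => (x == z) || (x.+1 \in s))) ords) Cs.
Proof. vm_compute. reflexivity. Qed.
Lemma Schk : all (fun s => stableP (fun x => x.+1 \in s) &&
   all (fun z : 'I_12 => (z.+1 \notin s) ==> ~~ stableP (fun x : 'I_12 => (x == z) || (x.+1 \in s))) ords) Ss.
Proof. vm_compute. reflexivity. Qed.
Lemma Ccov : all (fun x => all (fun y => G12 x y ==>
   has (fun s => (x.+1 \in s) && (y.+1 \in s)) Cs) ords) ords.
Proof. vm_compute. reflexivity. Qed.
Lemma Scov : all (fun x => all (fun y => ((x != y) && ~~ G12 x y) ==>
   has (fun s => (x.+1 \in s) && (y.+1 \in s)) Ss) ords) ords.
Proof. vm_compute. reflexivity. Qed.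
Lemma CSint : all (fun s : seq nat => all (fun t : seq nat =>
   has (fun x : 'I_12 => (x.+1 \in s) && (x.+1 \in t)) ords) Ss) Cs.
Proof. vm_compute. reflexivity. Qed.

Lemma memC K : K \in Cset -> exists2 s, s \in Cs & K = mk s.
Proof. by rewrite inE => /hasP[s sC /eqP ->]; exists s. Qed.
Lemma memS K : K \in Sset -> exists2 s, s \in Ss & K = mk s.
Proof. by rewrite inE => /hasP[s sC /eqP ->]; exists s. Qed.

Theorem proposition34 : weakly_CIS G12.
Proof.
exists Cset, Sset; split; [split|split|].
- move=> K /memC[s sC ->].
  have /andP[H1 /allP H2] := allP Cchk s sC.
  apply: max_of; first exact: clique_hered.
    by rewrite (@cliqueE _ (fun x => x.+1 \in s)) // => x; rewrite inE.
  move=> z; rewrite inE => zK; have /implyP := H2 z (mem_ords z).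
  move/(_ zK); rewrite (@cliqueE _ (fun x => (x == z) || (x.+1 \in s))) //.
  by move=> x; rewrite !inE.
- move=> x y exy.
  have /allP/(_ y (mem_ords y))/implyP/(_ exy)/hasP[s sC H] := allP Ccov x (mem_ords x).
  exists (mk s); first by rewrite inE; apply/hasP; exists s.
  by rewrite !inE.
- move=> K /memS[s sC ->].
  have /andP[H1 /allP H2] := allP Schk s sC.
  apply: max_of; first exact: stable_hered.
    by rewrite (@stableE _ (fun x => x.+1 \in s)) // => x; rewrite inE.
  move=> z; rewrite inE => zK; have /implyP := H2 z (mem_ords z).
  move/(_ zK); rewrite (@stableE _ (fun x => (x == z) || (x.+1 \in s))) //.
  by move=> x; rewrite !inE.
- move=> x y nxy nexy.
  have /allP/(_ y (mem_ords y))/implyP := allP Scov x (mem_ords x).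
  rewrite nxy nexy => /(_ isT)/hasP[s sC H].
  exists (mk s); first by rewrite inE; apply/hasP; exists s.
  by rewrite !inE.
- move=> K I /memC[s sC ->] /memS[t tS ->].
  have /hasP[x _ /andP[H1 H2]] := allP (allP CSint s sC) t tS.
  by apply/set0Pn; exists x; rewrite !inE H1 H2.
Qed.
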